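(* An ST graph $G$ with no twins is WDI if and only if (i) $D=\mathrm{Join}(G)$ is transitive, and (ii) for every arc $a\to b$ of $D$ there exists a vertex $c$ of $D$ such that $a\to c$ and $c\to b$ are arcs of $D$.
   Context: A digraph is a finite vertex set $V$ with arc set $E\subseteq V\times V$. $N^+(v),N^-(v)$ are out-/in-neighborhoods, $N(v)=N^+(v)\cup N^-(v)$, $d(v)=|N(v)|$. Source: $N^-(v)=\emptyset$; sink: $N^+(v)=\emptyset$; ST graph: every vertex is a source or a sink. Two distinct vertices of an ST graph are twins if $N(v)=N(w)$. A vertex $u$ is transitive if $x\to y$ is an arc for all $x\in N^-(u)$, $y\in N^+(u)$; a digraph is transitive if all its vertices are. An arc $v\to w$ is disimplicial if $x\to y$ is an arc for all $x\in N^-(w)$, $y\in N^+(v)$. A diclique is a pair $(V,W)$ of nonempty vertex sets, written $V\to W$, with $v\to w$ an arc for all $v\in V,w\in W$; an arc $v\to w$ belongs to it if $v\in V,w\in W$; it is maximal if not properly contained componentwise in another diclique; it is reduced if maximal and containing a disimplicial arc. A digraph is WDI if every arc belongs to a reduced diclique. The thin neighbor $\theta(v)$ is the unique $x\in N(v)$ with $d(x)<d(z)$ for all $z\in N(v)\setminus\{x\}$ (undefined if none); an arc $v\to w$ is thin if $\theta(v)=w$ and $\theta(w)=v$; thin arcs form a matching $M$ (no two share an endpoint); $V(M)$ is its endpoint set. $\mathrm{Join}(G)$ is the digraph with a vertex $(v,v)$ for each $v\notin V(M)$ and a vertex $(v,w)$ for each $v\to w\in M$, with $(v,w)\to(x,y)$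 an arc iff $v\to y\in E(G)$. *)

(* Defs.v *)
From mathcomp Require Import all_boot.
Set Implicit Arguments. Unset Strict Implicit. Unset Printing Implicit Defensive.

Section Digraphs.
Variables (T : finType) (E : rel T).

Definition outN (v : T) : {set T} := [set y | E v y].
Definition inN (v : T) : {set T} := [set x | E x v].
Definition nbhd (v : T) : {set T} := outN v :|: inN v.
Definition deg (v : T) : nat := #|nbhd v|.

Definition is_source (v : T) : bool := inN v == set0.
Definition is_sink (v : T) : bool := outN v == set0.
Definition ST_graph : Prop := forall v, is_source v || is_sink v.

Definition twins (v w : T) : bool := (v != w) && (nbhd v == nbhd w).
Definition no_twins : Prop := forall v w, ~~ twins v w.

Definition transitive_vertex (u : T) : Prop :=
  forall x y, x \in inN u -> y \in outN u -> E x y.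
Definition transitive_digraph : Prop := forall u, transitive_vertex u.

Definition disimplicial (v w : T) : Prop :=
  E v w /\ forall x y, x \in inN w -> y \in outN v -> E x y.

Definition diclique (A B : {set T}) : Prop :=
  A != set0 /\ B != set0 /\ forall a b, a \in A -> b \in B -> E a b.
Definition maximal_diclique (A B : {set T}) : Prop :=
  diclique A B /\
  ~ exists A' B', [/\ diclique A' B', A \subset A', B \subset B' & (A != A') || (B != B')].
Definition reduced_diclique (A B : {set T}) : Prop :=
  maximal_diclique A B /\ exists v w, [/\ v \in A, w \in B & disimplicial v w].
Definition WDI : Prop :=
  forall v w, E v w -> exists A B, [/\ reduced_diclique A B, v \in A & w \in B].

(* thin neighbour: thin_nb v x  <->  theta(v) is defined and equals x *)
Definition thin_nb (v x : T) : bool :=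
  (x \in nbhd v) && [forall z in nbhd v, (z != x) ==> (deg x < deg z)].
Definition thin_arc (v w : T) : bool := [&& E v w, thin_nb v w & thin_nb w v].
Definition in_VM (v : T) : bool := [exists w, thin_arc v w || thin_arc w v].

Definition join_pred (p : T * T) : bool :=
  ((p.1 == p.2) && ~~ in_VM p.1) || thin_arc p.1 p.2.
Definition join_vert := {p : T * T | join_pred p}.
Definition join_rel : rel join_vert := fun p q => E (val p).1 (val q).2.

End Digraphs.

Arguments join_pred {T} E p.
Arguments join_vert {T} E.
Arguments join_rel {T} E p q.
Arguments thin_nb {T} E v x.
Arguments thin_arc {T} E v w.
Arguments in_VM {T} E v.

(* Main.v *)
Require Import Defs.
From mathcomp Require Import all_boot.
Set Implicit Arguments. Unset Strict Implicit. Unset Printing Implicit Defensive.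

Section Aux.
Variables (T : finType) (E : rel T).
Hypothesis ST : ST_graph E.
Hypothesis NT : no_twins E.

Lemma inNE v x : (x \in inN E v) = E x v. Proof. by rewrite inE. Qed.
Lemma outNE v x : (x \in outN E v) = E v x. Proof. by rewrite inE. Qed.

Lemma no_mid a v b : E a v -> E v b -> False.
Proof.
move=> Hav Hvb; case/orP: (ST v) => /eqP H.
  by have := inNE v a; rewrite H inE Hav.
by have := outNE v b; rewrite H inE Hvb.
Qed.

Lemma nbhd_src v y : E v y -> nbhd E v = outN E v.
Proof.
move=> Hvy; apply/setP=> z; rewrite /nbhd !inE.
case Hzv: (E z v) => //; first by case: (no_mid Hzv Hvy).
by rewrite orbF.
Qed.

Lemma nbhd_snk v x : E x v -> nbhd E v = inN E v.
Proof.
move=> Hxv; apply/setP=> z; rewrite /nbhd !inE.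
case Hvz: (E v z) => //; by case: (no_mid Hxv Hvz).
Qed.

Lemma dis_lt_src a b x : disimplicial E a b -> E x b -> x != a -> deg E a < deg E x.
Proof.
move=> [Hab Hd] Hxb Hxa.
rewrite /deg (nbhd_src Hab) (nbhd_src Hxb).
have Hs : outN E a \subset outN E x.
  by apply/subsetP=> y; rewrite !outNE => Hy; apply: Hd; rewrite ?inNE ?outNE.
apply: proper_card; rewrite properEneq Hs andbT.
apply/negP=> /eqP He.
have := NT x a; rewrite /twins Hxa /= (nbhd_src Hab) (nbhd_src Hxb) He eqxx.
by [].
Qed.

Lemma dis_lt_snk a b y : disimplicial E a b -> E a y -> y != b -> deg E b < deg E y.
Proof.
move=> [Hab Hd] Hay Hyb.
rewrite /deg (nbhd_snk Hab) (nbhd_snk Hay).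
have Hs : inN E b \subset inN E y.
  by apply/subsetP=> x; rewrite !inNE => Hx; apply: Hd; rewrite ?inNE ?outNE.
apply: proper_card; rewrite properEneq Hs andbT.
apply/negP=> /eqP He.
have := NT y b; rewrite /twins Hyb /= (nbhd_snk Hab) (nbhd_snk Hay) He eqxx.
by [].
Qed.

Lemma dis_thin v w : disimplicial E v w -> thin_arc E v w.
Proof.
move=> Hd; have Hvw := Hd.1.
rewrite /thin_arc Hvw /thin_nb /=; apply/andP; split; apply/andP; split.
- by rewrite /nbhd !inE Hvw.
- apply/forall_inP=> z; rewrite (nbhd_src Hvw) outNE => Hvz; apply/implyP=> Hzw.
  exact: (dis_lt_snk Hd Hvz Hzw).
- by rewrite /nbhd !inE Hvw orbT.
- apply/forall_inP=> z; rewrite (nbhd_snk Hvw) inNE => Hzw; apply/implyP=> Hzv.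
  exact: (dis_lt_src Hd Hzw Hzv).
Qed.

Lemma thin_nb_lt w v z : thin_nb E w v -> z \in nbhd E w -> z != v -> deg E v < deg E z.
Proof.
case/andP=> _ /forall_inP H Hz Hzv; by have := H z Hz; rewrite Hzv.
Qed.

Lemma WDI_thin_dis v w : WDI E -> thin_arc E v w -> disimplicial E v w.
Proof.
move=> HW /and3P [Hvw Hvt Hwt].
have [A [B [[[[_ [_ Hab]] _] [a [b [Ha Hb Hd]]]] HvA HwB]]] := HW v w Hvw.
have Hvb := Hab _ _ HvA Hb; have Haw := Hab _ _ Ha HwB.
have ea : a = v.
  case: (eqVneq a v) => // Hav.
  have Hva : v != a by rewrite eq_sym Hav.
  have h1 := dis_lt_src Hd Hvb Hva.
  have h2 : deg E v < deg E a.
    apply: (thin_nb_lt Hwt) => //; by rewrite /nbhd !inE Haw orbT.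
  by move: h2; rewrite ltnNge (ltnW h1).
have eb : b = w.
  case: (eqVneq b w) => // Hbw.
  have Hwb : w != b by rewrite eq_sym Hbw.
  have h1 := dis_lt_snk Hd Haw Hwb.
  have h2 : deg E w < deg E b.
    apply: (thin_nb_lt Hvt) => //; by rewrite /nbhd !inE Hvb.
  by move: h2; rewrite ltnNge (ltnW h1).
by rewrite -ea -eb.
Qed.

Lemma join_fst x y : E x y -> exists a : join_vert E, (val a).1 = x.
Proof.
move=> Hxy; case Hv: (in_VM E x).
  case/existsP: Hv => w /orP [Ht|Ht].
    have P : join_pred E (x, w) by rewrite /join_pred /= Ht orbT.
    by exists (exist _ (x, w) P).
  by case/and3P: Ht => Hwx _ _; case: (no_mid Hwx Hxy).
have P : join_pred E (x, x) by rewrite /join_pred /= eqxx Hv.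
by exists (exist _ (x, x) P).
Qed.

Lemma join_snd x y : E x y -> exists a : join_vert E, (val a).2 = y.
Proof.
move=> Hxy; case Hv: (in_VM E y).
  case/existsP: Hv => w /orP [Ht|Ht].
    by case/and3P: Ht => Hwx _ _; case: (no_mid Hxy Hwx).
  have P : join_pred E (w, y) by rewrite /join_pred /= Ht orbT.
  by exists (exist _ (w, y) P).
have P : join_pred E (y, y) by rewrite /join_pred /= eqxx Hv.
by exists (exist _ (y, y) P).
Qed.

End Aux.

Theorem theorem14 (T : finType) (E : rel T) :
  ST_graph E -> no_twins E ->
  (WDI E <->
   (transitive_digraph (join_rel E) /\
    (forall a b : join_vert E, join_rel E a b ->
       exists c : join_vert E, join_rel E a c /\ join_rel E c b))).
Proof.
move=> ST NT; split.
- move=> HW; split.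
  + move=> [[u1 u2] Pu] [[x1 x2] Px] [[y1 y2] Py].
    rewrite !inE /join_rel /= => Hx Hy.
    case/orP: Pu => [/andP [/eqP /= e _]|/= Ht].
      by subst u2; case: (no_mid ST Hx Hy).
    by have [_ Hd] := WDI_thin_dis ST NT HW Ht; apply: Hd; rewrite inE.
  + move=> [[a1 a2] Pa] [[b1 b2] Pb]; rewrite /join_rel /= => Hab.
    have [A [B [[[[_ [_ Hd]] _] [p [q [Hp Hq Hpq]]]] HaA HbB]]] := HW a1 b2 Hab.
    have P : join_pred E (p, q) by rewrite /join_pred /= (dis_thin ST NT Hpq) orbT.
    exists (exist _ (p, q) P); rewrite /join_rel /=; split; exact: Hd.
- move=> [Htr Hc] x y Hxy.
  have [a ea] := join_fst ST Hxy; have [b eb] := join_snd ST Hxy.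
  have Hab : join_rel E a b by rewrite /join_rel ea eb.
  have [[[c1 c2] Pc] [Hac Hcb]] := Hc a b Hab.
  move: Hac Hcb; rewrite /join_rel /= ea eb => Hxc Hcy.
  have Ht : thin_arc E c1 c2.
    case/orP: Pc => [/andP [/eqP /= e _]|//].
    by subst c2; case: (no_mid ST Hxc Hcy).
  have Hc12 : E c1 c2 by case/and3P: Ht.
  have Hd : disimplicial E c1 c2.
    split => // p q; rewrite inE => Hp; rewrite inE => Hq.
    have [pa epa] := join_fst ST Hp; have [qb eqb] := join_snd ST Hq.
    have := Htr (exist _ (c1, c2) Pc) pa qb.
    by rewrite !inE /join_rel /= epa eqb; apply.
  exists (inN E c2), (outN E c1); split; rewrite ?inE //.
  split; last by exists c1, c2; rewrite !inE.
  have Hdc : diclique E (inN E c2) (outN E c1).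
    split; first by apply/set0Pn; exists c1; rewrite inE.
    split; first by apply/set0Pn; exists c2; rewrite inE.
    by move=> p q; rewrite !inE => Hp Hq; apply: Hd.2; rewrite inE.
  split => //.
  move=> [A' [B' [[_ [_ H']] HA HB]]].
  have eA : inN E c2 = A'.
    apply/eqP; rewrite eqEsubset HA; apply/subsetP=> z Hz; rewrite inE.
    apply: H' => //; apply: (subsetP HB); by rewrite inE.
  have eB : outN E c1 = B'.
    apply/eqP; rewrite eqEsubset HB; apply/subsetP=> z Hz; rewrite inE.
    apply: H' => //; apply: (subsetP HA); by rewrite inE.
  by rewrite eA eB !eqxx.
Qed.
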